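(* Let $\rho$ be the real number (with $\rho\in(0.6543,0.6632)$) such that \[ \int_0^1\prod_{0\leq k<\lambda}\left|\sin(2^k\pi\theta)\right|\,d\theta\asymp\rho^\lambda \] for all integers $\lambda\geq 0$. Then, uniformly for real $z\geq 1$, \[ \int_0^1\sup_{x\geq 0}\left|\sum_{x<m\leq x+z}(-1)^{s_2(m)}e(m\theta)\right|\,d\theta\ll z^{1+\frac{\log\rho}{\log 2}}. \]
   Context: $s_2(m)$ denotes the sum of the binary digits of the nonnegative integer $m$; $e(x)=e^{2\pi i x}$; the sum ranges over integers $m$ in $(x,x+z]$. The existence of $\rho$ with the stated property and bounds is a known result of Fouvry and Mauduit; $A\asymp B$ means $A\ll B$ and $B\ll A$ with constants independent of $\lambda$, and $\ll$ has an absolute implied constant independent of $z$. *)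

(* Defs.v *)
From HB Require Import structures.
From mathcomp Require Import all_boot all_order all_algebra.
From mathcomp Require Import all_classical all_reals all_analysis.
From mathcomp Require Import complex.
Set Implicit Arguments. Unset Strict Implicit. Unset Printing Implicit Defensive.
Import Order.TTheory GRing.Theory Num.Theory.
Local Open Scope ring_scope.

(* s_2(m): sum of the binary digits of m. The i-th binary digit of m is
   (m %/ 2^i) %% 2, and all digits of index >= m.+1 vanish since m < 2^(m.+1). *)
Definition s2 (m : nat) : nat := (\sum_(i < m.+1) ((m %/ 2 ^ i) %% 2))%N.

Definition e_ (R : realType) (t : R) : R[i] :=
  Complex (cos (2 * pi * t)) (sin (2 * pi * t)).

(* sum_{x < m <= x + z} (-1)^{s_2(m)} e(m theta), for x >= 0 (so m ranges over
   naturals, all of which are <= truncn (x + z)). *)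
Definition Thue_Morse_sum (R : realType) (theta x z : R) : R[i] :=
  \sum_(m < (Num.truncn (x + z)).+1 | (x < m%:R) && (m%:R <= x + z))
     ((-1) ^+ s2 m * e_ (m%:R * theta)).

Definition cmod (R : realType) (w : R[i]) : R := Normc.normc w.

Definition sup_abs_sum (R : realType) (z theta : R) : \bar R :=
  ereal_sup [set (cmod (Thue_Morse_sum theta x z))%:E | x in [set x : R | 0 <= x]].

Definition sin_prod (R : realType) (lambda : nat) (theta : R) : R :=
  \prod_(k < lambda) `|sin (2 ^+ k * pi * theta)|.

(* Main.v *)
Require Import Defs.
From HB Require Import structures.
From mathcomp Require Import all_boot all_order all_algebra.
From mathcomp Require Import all_classical all_reals all_analysis.
From mathcomp Require Import complex.
From mathcomp Require Import zify ring lra.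
From mathcomp Require Import measurable_realfun.
Import Order.TTheory GRing.Theory Num.Theory.
Local Open Scope ring_scope.
Local Open Scope classical_set_scope.
Definition digsum (K m : nat) : nat := (\sum_(i < K) ((m %/ 2 ^ i) %% 2))%N.

Lemma digsum_S K m b : (b < 2)%N ->
  digsum K.+1 (m.*2 + b) = (b + digsum K m)%N.
Proof.
move=> b2; rewrite /digsum big_ord_recl /= expn0 divn1.
congr addn.
  by rewrite -muln2 modnMDl modn_small.
apply: eq_bigr => i _; congr modn.
rewrite /bump /= add1n expnS divnMA; congr divn.
by rewrite -muln2 divnMDl // divn_small // addn0.
Qed.

Lemma digsum_stable K j m : (m < 2 ^ K)%N -> digsum (K + j) m = digsum K m.
Proof.
move=> mK; elim: j => [|j IH]; first by rewrite addn0.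
rewrite /digsum addnS big_ord_recr /= -/(digsum _ _) IH.
rewrite divn_small ?mod0n ?addn0 //.
by apply: (leq_trans mK); rewrite leq_exp2l // leq_addr.
Qed.

Lemma digsum_s2 K m : (m < 2 ^ K)%N -> digsum K m = s2 m.
Proof.
move=> mK; have m1 : (m < 2 ^ m.+1)%N.
  by apply: (ltn_trans (ltn_expl m (isT : 1 < 2)%N)); rewrite ltn_exp2l.
rewrite /s2 -/(digsum m.+1 m).
by rewrite -(@digsum_stable K m.+1 m mK) -(@digsum_stable m.+1 K m m1) addnC.
Qed.

Lemma s2_db m b : (b < 2)%N -> s2 (m.*2 + b) = (b + s2 m)%N.
Proof.
move=> b2.
have mm : (m < 2 ^ (m.*2 + b))%N.
  apply: (leq_trans (ltn_expl m (isT : 1 < 2)%N)).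
  by rewrite leq_exp2l // -addnn -addnA leq_addr.
have mm1 : (m.*2 + b < 2 ^ (m.*2 + b).+1)%N.
  by apply: (ltn_trans (ltn_expl _ (isT : 1 < 2)%N)); rewrite ltn_exp2l.
by rewrite -(@digsum_s2 _ _ mm1) digsum_S // (@digsum_s2 _ _ mm).
Qed.
Section S.
Variable R : realType.
Implicit Types (theta t : R).
Import Normc.

Lemma e_D (x y : R) : e_ (x + y) = e_ x * e_ y.
Proof.
rewrite /e_ mulrDr cosD sinD /=; congr Complex; ring.
Qed.

Lemma normc_e (t : R) : normc (e_ t) = 1.
Proof. by rewrite /e_ /= cos2Dsin2 sqrtr1. Qed.

Lemma normc_sign k : normc ((-1) ^+ k : R[i]) = 1.
Proof.
elim: k => [|k IH]; first by rewrite expr0 normc1.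
by rewrite exprS normcM IH mulr1 /= oppr0 expr0n /= addr0 sqrrN expr1n sqrtr1.
Qed.

Definition tmf theta (m : nat) : R[i] := (-1) ^+ s2 m * e_ (m%:R * theta).
Definition G theta (a b : nat) : R[i] := \sum_(a <= m < b) tmf theta m.

Lemma normc_tmf theta m : normc (tmf theta m) = 1.
Proof. by rewrite /tmf normcM normc_sign normc_e mulr1. Qed.

Lemma normc_sum (I : Type) (r : seq I) (F : I -> R[i]) :
  normc (\sum_(i <- r) F i) <= \sum_(i <- r) normc (F i).
Proof.
elim: r => [|x r IH]; first by rewrite !big_nil normc0.
rewrite !big_cons; have H := @le_normcD R (F x) (\sum_(i <- r) F i).
exact: (le_trans H (lerD (lexx _) IH)).
Qed.

Lemma G_len theta a b : normc (G theta a b) <= (b - a)%:R.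
Proof.
rewrite /G; apply: le_trans (@normc_sum _ (index_iota a b) (tmf theta)) _.
under eq_bigr do rewrite normc_tmf.
by rewrite sumr_const_nat.
Qed.

Lemma normc_1me theta : normc (1 - e_ theta) = 2 * `|sin (pi * theta)|.
Proof.
rewrite /e_ /=.
have -> : 2 * pi * theta = pi * theta + pi * theta by ring.
rewrite cosD sinD.
set c := cos (pi * theta); set s := sin (pi * theta).
have cs : c ^+ 2 + s ^+ 2 = 1 by rewrite cos2Dsin2.
have -> : (1 - (c * c - s * s)) ^+ 2 + (0 - (s * c + c * s)) ^+ 2 = (2 * s) ^+ 2.
  have -> : (1 - (c * c - s * s)) ^+ 2 + (0 - (s * c + c * s)) ^+ 2 =
     (2 * s) ^+ 2 + (1 - (c ^+ 2 + s ^+ 2)) ^+ 2 by ring.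
  by rewrite cs subrr expr0n /= addr0.
by rewrite sqrtr_sqr normrM ger0_norm.
Qed.

Lemma tmf_double theta l :
  tmf theta (l.*2) + tmf theta (l.*2).+1 = (1 - e_ theta) * tmf (2 * theta) l.
Proof.
have h0 := (@s2_db l 0 isT); rewrite addn0 add0n in h0.
have h1 := (@s2_db l 1 isT); rewrite addn1 add1n in h1.
rewrite /tmf h0 h1 exprS.
have -> : ((l.*2)%:R * theta) = l%:R * (2 * theta).
  by rewrite -muln2 natrM; ring.
have -> : ((l.*2).+1%:R * theta) = l%:R * (2 * theta) + theta.
  by rewrite -addn1 -muln2 natrD natrM; ring.
rewrite e_D; ring.
Qed.

Lemma G_double theta n l : (n <= l)%N ->
  G theta (n.*2) (l.*2) = (1 - e_ theta) * G (2 * theta) n l.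
Proof.
elim: l => [|l IH]; first by rewrite leqn0 => /eqP ->; rewrite /G !big_geq // mulr0.
rewrite leq_eqVlt => /orP [/eqP ->|]; first by rewrite /G !big_geq // mulr0.
rewrite ltnS => nl.
rewrite /G doubleS !big_nat_recr //=; last 2 first.
- by rewrite leq_double.
- by rewrite leqW // leq_double.
rewrite -/(G _ _ _) -/(G _ _ _) IH // -addrA tmf_double; ring.
Qed.

Definition Bnd (lam : nat) theta := \sum_(k < lam) 2 ^+ k.+1 * sin_prod k theta.

Lemma sin_prod_ge0 k theta : 0 <= sin_prod k theta.
Proof. by apply: prodr_ge0 => i _. Qed.

Lemma sin_prodS k theta :
  sin_prod k.+1 theta = `|sin (pi * theta)| * sin_prod k (2 * theta).
Proof.
rewrite /sin_prod big_ord_recl /= expr0 mul1r; congr (_ * _).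
apply: eq_bigr => i _; congr (`|sin _|).
rewrite /bump /= add1n exprS; ring.
Qed.

Lemma Bnd_ge0 lam theta : 0 <= Bnd lam theta.
Proof.
apply: sumr_ge0 => i _; apply: mulr_ge0; last exact: sin_prod_ge0.
exact: exprn_ge0.
Qed.

Lemma BndS lam theta :
  Bnd lam.+1 theta = 2 + 2 * `|sin (pi * theta)| * Bnd lam (2 * theta).
Proof.
rewrite /Bnd big_ord_recl /= /sin_prod big_ord0 mulr1 expr1; congr (_ + _).
rewrite mulr_sumr; apply: eq_bigr => i _.
rewrite -/(sin_prod _ _) -/(sin_prod _ _) /bump /= add1n sin_prodS !exprS; ring.
Qed.

Lemma main_bound lam : forall theta a b, (b - a < 2 ^ lam)%N ->
  normc (G theta a b) <= Bnd lam theta.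
Proof.
elim: lam => [|lam IH] theta a b hab.
  rewrite /G big_geq; last by move: hab; rewrite expn0; lia.
  by rewrite normc0 /Bnd big_ord0.
have [ba|ab] := leqP b a.
  by rewrite /G big_geq // normc0 Bnd_ge0.
set c1 := (a + a %% 2)%N; set c2 := (b - b %% 2)%N.
have [c12|c21] := leqP c1 c2; last first.
  apply: le_trans (G_len _ _ _) _.
  rewrite BndS; apply: le_trans (_ : 2 <= _).
    have : (b - a <= 1)%N by rewrite /c1 /c2 in c21; lia.
    move=> h; apply: le_trans (_ : 1%:R <= _); first by rewrite ler_nat.
    lra.
  rewrite lerDl; apply: mulr_ge0; last exact: Bnd_ge0.
  by apply: mulr_ge0.
have ac1 : (a <= c1)%N by rewrite /c1; lia.
have c2b : (c2 <= b)%N by rewrite /c2; lia.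
rewrite /G (big_cat_nat ac1) /=; last by lia.
rewrite (big_cat_nat c12 c2b) /= -!/(G _ _ _).
have -> : c1 = ((a + 1) %/ 2).*2 by rewrite /c1; lia.
have -> : c2 = (b %/ 2).*2 by rewrite /c2; lia.
rewrite G_double; last by rewrite /c1 /c2 in c12; lia.
rewrite BndS.
have H1 : normc (G theta a ((a + 1) %/ 2).*2) <= 1.
  apply: le_trans (G_len _ _ _) _; rewrite (_ : 1 = 1%:R) // ler_nat; lia.
have H3 : normc (G theta (b %/ 2).*2 b) <= 1.
  apply: le_trans (G_len _ _ _) _; rewrite (_ : 1 = 1%:R) // ler_nat; lia.
have H2 : normc (G (2 * theta) ((a + 1) %/ 2) (b %/ 2)) <= Bnd lam (2 * theta).
  apply: IH; move: hab; rewrite expnS; lia.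
have E := @le_normcD R.
apply: le_trans (E _ _) _.
apply: le_trans (lerD (lexx _) (E _ _)) _.
rewrite normcM normc_1me.
have s0 : 0 <= 2 * `|sin (pi * theta)| by [].
have := ler_wpM2l s0 H2.
lra.
Qed.


Lemma TM_G theta x z : 0 <= x -> 0 <= z ->
  Thue_Morse_sum theta x z = G theta (Num.truncn x).+1 (Num.truncn (x + z)).+1.
Proof.
move=> x0 z0; rewrite /Thue_Morse_sum /G big_geq_mkord; apply: eq_bigl => m /=.
have mT := ltn_ord m; rewrite ltnS in mT.
have xz0 : 0 <= x + z by rewrite addr_ge0.
rewrite -(truncn_lt_nat _ x0) -(truncn_ge_nat _ xz0) mT andbT.
by [].
Qed.

Definition lamz (z : R) : nat := (trunc_log 2 (Num.truncn z)).+2.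

Lemma pointwise theta x z : 0 <= x -> 1 <= z ->
  cmod (Thue_Morse_sum theta x z) <= Bnd (lamz z) theta.
Proof.
move=> x0 z1; have z0 : 0 <= z by lra.
rewrite /cmod TM_G //; apply: main_bound.
have h1 : (Num.truncn (x + z) <= (Num.truncn x + Num.truncn z).+1)%N.
  rewrite truncn_le_nat -!natr1.
  have := truncnS_gt x; have := truncnS_gt z; rewrite -!natr1; lra.
have h2 := @trunc_log_ltn 2 (Num.truncn z) isT.
rewrite /lamz !expnS; rewrite !expnS in h2; lia.
Qed.

Lemma sup_bound theta z : 1 <= z ->
  (sup_abs_sum z theta <= (Bnd (lamz z) theta)%:E)%E.
Proof.
move=> z1; apply: ge_ereal_sup => _ [x x0 <-]; rewrite lee_fin.
exact: pointwise.
Qed.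

Lemma sup_ge0 theta z : (0 <= sup_abs_sum z theta)%E.
Proof.
apply: le_ereal_sup_tmp; exists (cmod (Thue_Morse_sum theta 0 z))%:E.
  by exists 0 => //=.
rewrite lee_fin /cmod; case: (Thue_Morse_sum theta 0 z) => ? ?; exact: sqrtr_ge0.
Qed.


Local Open Scope ereal_scope.

Lemma le_int_nm (D : set R) (f g : R -> \bar R) :
  (forall x, D x -> 0 <= f x) -> (forall x, D x -> f x <= g x) ->
  \int[@lebesgue_measure R]_(x in D) f x <= \int[@lebesgue_measure R]_(x in D) g x.
Proof.
move=> f0 fg.
have g0 : forall x, D x -> 0 <= g x by move=> x Dx; exact: le_trans (f0 x Dx) (fg x Dx).
rewrite !ge0_integralE //; apply: ereal_sup_le => _ [h hf <-]; exists h => //= x.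
apply: le_trans (hf x) _; rewrite /patch; case: ifP => // /[1!inE] Dx.
exact: fg.
Qed.

Lemma meas_sin_prod (D : set R) k : measurable_fun D (sin_prod k).
Proof.
rewrite /sin_prod; apply: measurable_prod => i _.
apply: measurable_funTS.
apply: (measurableT_comp (f := @Num.norm _ R)); first exact: measurable_realfun.normr_measurable.
apply: (measurableT_comp (f := @sin R)).
  exact: (measurable_realfun.continuous_measurable_fun (@continuous_sin R)).
apply: measurable_funM => //; exact: measurable_cst.
Qed.

Lemma int_Bnd lam :
  \int[@lebesgue_measure R]_(x in `[0%R, 1%R]) (Bnd lam x)%:E =
  \sum_(k < lam) (2 ^+ k.+1)%:E *
     \int[@lebesgue_measure R]_(x in `[0%R, 1%R]) (sin_prod k x)%:E.
Proof.
under eq_integral do rewrite /Bnd -sumEFin.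
rewrite ge0_integral_sum //; last 2 first.
- move=> k; apply/measurable_EFinP; apply: measurable_funM.
    exact: measurable_cst.
  exact: meas_sin_prod.
- move=> k x _; rewrite lee_fin; apply: mulr_ge0; last exact: sin_prod_ge0.
  exact: exprn_ge0.
apply: eq_bigr => k _.
under eq_integral do rewrite EFinM.
rewrite ge0_integralZl_EFin //.
- move=> x _; rewrite lee_fin; exact: sin_prod_ge0.
- apply/measurable_EFinP; exact: meas_sin_prod.
Qed.

Local Close Scope ereal_scope.

Lemma geom (q : R) n : 1 < q -> (q - 1) * \sum_(k < n) q ^+ k <= q ^+ n.
Proof.
move=> q1; elim: n => [|n IH]; first by rewrite big_ord0 mulr0 expr0.
rewrite big_ord_recr /= mulrDr exprS.
have -> : q * q ^+ n = q ^+ n + (q - 1) * q ^+ n by ring.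
exact: lerD.
Qed.

Lemma pow_bound (rho z : R) : 0 < rho -> 1 < 2 * rho -> 1 <= z ->
  (2 * rho) ^+ (trunc_log 2 (Num.truncn z)) <= z `^ (1 + ln rho / ln 2).
Proof.
move=> r0 r1 z1.
set tl := trunc_log 2 (Num.truncn z); set a := 1 + ln rho / ln 2.
have ln2 : 0 < ln (2 : R) by apply: ln_gt0; lra.
have a0 : 0 <= a.
  have -> : a = ln (2 * rho) / ln 2.
    have rp : rho \in Num.pos by rewrite posrE.
    have tp : (2:R) \in Num.pos by rewrite posrE.
    rewrite lnM //.
    rewrite /a; field; exact: lt0r_neq0.
  apply: divr_ge0; last lra.
  apply: ln_ge0; lra.
have t1 : (0 < Num.truncn z)%N by rewrite truncn_gt0.
have h1 : ((2 ^ tl)%:R <= z).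
  have := @trunc_logP 2 (Num.truncn z) isT t1; rewrite -/tl => h.
  apply: le_trans (_ : (Num.truncn z)%:R <= z); first by rewrite ler_nat.
  by rewrite truncn_le; lra.
have h2 : (2 ^ tl)%:R `^ a <= z `^ a.
  apply: ge0_ler_powR => //; rewrite nnegrE //; lra.
apply: le_trans h2; rewrite le_eqVlt; apply/orP; left; apply/eqP.
have p2 : (2 : R) `^ a = 2 * rho.
  rewrite /powR (negbTE (lt0r_neq0 (_ : (0:R) < 2))) //.
  have -> : a * ln 2 = ln (2 * rho).
    have rp : rho \in Num.pos by rewrite posrE.
    have tp : (2:R) \in Num.pos by rewrite posrE.
    rewrite lnM // /a; field; exact: lt0r_neq0.
  by rewrite lnK // posrE; apply: mulr_gt0.
rewrite natrX -p2 -(@powR_mulrn _ (2 `^ a)) ?powR_ge0 // -powRrM mulrC powRrM powR_mulrn //.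
Qed.
End S.

Theorem proposition2 (R : realType) (rho : R) :
  6543 / 10000 < rho < 6632 / 10000 ->
  (exists c1 c2 : R, 0 < c1 /\ 0 < c2 /\
     forall lambda : nat,
       ((c1 * rho ^+ lambda)%:E <=
          \int[@lebesgue_measure R]_(theta in `[0%R, 1%R]) (sin_prod lambda theta)%:E)%E /\
       (\int[@lebesgue_measure R]_(theta in `[0%R, 1%R]) (sin_prod lambda theta)%:E <=
          (c2 * rho ^+ lambda)%:E)%E) ->
  exists C : R, 0 < C /\
    forall z : R, 1 <= z ->
      (\int[@lebesgue_measure R]_(theta in `[0%R, 1%R]) sup_abs_sum z theta <=
         (C * z `^ (1 + ln rho / ln 2))%:E)%E.
Proof.
move=> /andP[r1 r2] [c1 [c2 [c10 [c20 H]]]].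
have r0 : 0 < rho by lra.
set q := 2 * rho.
have q1 : 1 < q by rewrite /q; lra.
have q10 : 0 < q - 1 by lra.
exists (2 * c2 * q ^+ 2 / (q - 1)); split.
  apply: divr_gt0 => //; apply: mulr_gt0; first by apply: mulr_gt0.
  by apply: exprn_gt0; lra.
move=> z z1.
have Hle : (\int[@lebesgue_measure R]_(x in `[0%R, 1%R]) sup_abs_sum z x <=
   \int[@lebesgue_measure R]_(x in `[0%R, 1%R]) (@Bnd R (@lamz R z) x)%:E)%E.
  apply: le_int_nm => x _; [exact: sup_ge0 | exact: sup_bound].
apply: (le_trans Hle).
rewrite int_Bnd.
have Hs : (\sum_(k < @lamz R z) (2 ^+ k.+1)%:E *
     \int[@lebesgue_measure R]_(x in `[0%R, 1%R]) (sin_prod k x)%:E <=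
   \sum_(k < @lamz R z) ((2 * c2) * q ^+ k)%:E)%E.
  apply: lee_sum => k _.
  rewrite (_ : (2 * c2 * q ^+ k) = 2 ^+ k.+1 * (c2 * rho ^+ k)); last first.
    by rewrite /q exprMn exprS; ring.
  rewrite EFinM; apply: lee_wpmul2l; last exact: (H k).2.
  by rewrite lee_fin; exact: exprn_ge0.
apply: (le_trans Hs).
rewrite sumEFin lee_fin -mulr_sumr.
set S := \sum_(k < @lamz R z) q ^+ k.
have G := @geom R q (lamz R z) q1; rewrite -/S in G.
have P := @pow_bound R rho z r0 q1 z1; rewrite -/q in P.
have S1 : S <= q ^+ 2 * z `^ (1 + ln rho / ln 2) / (q - 1).
  rewrite ler_pdivlMr // mulrC; apply: le_trans G _.
  rewrite /lamz -addn2 exprD mulrC; apply: ler_wpM2l => //.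
  by apply: exprn_ge0; lra.
rewrite -!mulrA; apply: ler_wpM2l; first lra.
apply: le_trans (ler_wpM2l (ltW c20) S1) _.
rewrite le_eqVlt; apply/orP; left; apply/eqP; rewrite /q; field. exact: (lt0r_neq0 q10).
Qed.
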